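(* For all integers $a,b,c,d,e$: $$(F_{d-a}F_{e-b}-F_{e-a}F_{d-b})F_{b-c}=(F_{d-c}F_{e-b}-F_{e-c}F_{d-b})F_{b-a},$$ $$(J_{d-a}J_{e-b}-J_{e-a}J_{d-b})J_{b-c}=(J_{d-c}J_{e-b}-J_{e-c}J_{d-b})J_{b-a},$$ $$(P_{d-a}P_{e-b}-P_{e-a}P_{d-b})P_{b-c}=(P_{d-c}P_{e-b}-P_{e-c}P_{d-b})P_{b-a}.$$
   Context: All sequences are indexed by $n\in\mathbb Z$. Fibonacci numbers $F_n$: $F_n=F_{n-1}+F_{n-2}$ for all $n\in\mathbb Z$, $F_0=0,F_1=1$ (so $F_{-n}=(-1)^{n-1}F_n$). Jacobsthal numbers $J_n$: $J_n=J_{n-1}+2J_{n-2}$ for all $n\in\mathbb Z$, $J_0=0,J_1=1$ (so $J_{-n}=(-1)^{n-1}2^{-n}J_n$, rational for negative index). Pell numbers $P_n$: $P_n=2P_{n-1}+P_{n-2}$ for all $n\in\mathbb Z$, $P_0=0,P_1=1$ (so $P_{-n}=(-1)^{n-1}P_n$). *)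

(* Defs.v *)
(* sequences take real values (Jacobsthal numbers are rational
   at negative indices). *)
From Stdlib Require Import Reals ZArith Lra Lia.
Open Scope R_scope.

(* Two-sided sequence u with u_0 = 0, u_1 = 1 and u_n = p u_{n-1} + q u_{n-2}
   for all integers n (q <> 0, so the recurrence can be run backwards:
   u_{n-2} = (u_n - p u_{n-1}) / q). *)
Definition fwd (p q : R) (s : R * R) : R * R :=
  (snd s, p * snd s + q * fst s).
Definition bwd (p q : R) (s : R * R) : R * R :=
  ((snd s - p * fst s) / q, fst s).

Fixpoint iter_pair (f : R * R -> R * R) (n : nat) (s : R * R) : R * R :=
  match n with O => s | S k => f (iter_pair f k s) end.

Definition lucasU (p q : R) (n : Z) : R :=
  if (0 <=? n)%Z then fst (iter_pair (fwd p q) (Z.to_nat n) (0, 1))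
  else fst (iter_pair (bwd p q) (Z.to_nat (- n)) (0, 1)).

Definition Fib (n : Z) : R := lucasU 1 1 n.
Definition Jac (n : Z) : R := lucasU 1 2 n.
Definition Pell (n : Z) : R := lucasU 2 1 n.

Example Fib_m1 : Fib (-1) = 1.
Proof. unfold Fib, lucasU; simpl; field. Qed.
Example Jac_m2 : Jac (-2) = - 1/4.
Proof. unfold Jac, lucasU; simpl; field. Qed.
Example Pell_3 : Pell 3 = 5.
Proof. unfold Pell, lucasU; simpl; field. Qed.

(* Main.v *)
Require Import Defs.
From Stdlib Require Import Reals ZArith Lra Lia.
Open Scope R_scope.

Section G.
Variables p q : R.
Hypothesis hq : q <> 0.
Notation U := (lucasU p q).

Lemma U_pos (k : nat) : U (Z.of_nat k) = fst (iter_pair (fwd p q) k (0,1)).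
Proof. unfold lucasU. rewrite Nat2Z.id. replace (0 <=? Z.of_nat k)%Z with true by (symmetry; apply Z.leb_le; lia). reflexivity. Qed.

Lemma U_neg (k : nat) : U (- Z.of_nat k) = fst (iter_pair (bwd p q) k (0,1)).
Proof. unfold lucasU. destruct k as [|k].
- simpl. reflexivity.
- replace (0 <=? - Z.of_nat (S k))%Z with false by (symmetry; apply Z.leb_gt; lia).
  rewrite Z.opp_involutive, Nat2Z.id. reflexivity. Qed.

Lemma snd_fwd (k : nat) : snd (iter_pair (fwd p q) k (0,1)) = fst (iter_pair (fwd p q) (S k) (0,1)).
Proof. reflexivity. Qed.

Lemma snd_bwd (k : nat) : snd (iter_pair (bwd p q) k (0,1)) = U (1 - Z.of_nat k).
Proof. destruct k as [|k].
- simpl. unfold lucasU. simpl. reflexivity.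
- simpl snd. replace (1 - Z.of_nat (S k))%Z with (- Z.of_nat k)%Z by lia.
  rewrite U_neg. reflexivity. Qed.

Lemma U_rec (n : Z) : U (n + 2) = p * U (n + 1) + q * U n.
Proof.
  destruct (Z_le_gt_dec 0 n) as [H|H].
  - destruct (Z_of_nat_complete n H) as [k ->].
    replace (Z.of_nat k + 2)%Z with (Z.of_nat (S (S k))) by lia.
    replace (Z.of_nat k + 1)%Z with (Z.of_nat (S k)) by lia.
    rewrite !U_pos. simpl. unfold fwd at 1. simpl. reflexivity.
  - assert (Hk : (0 <= - n - 1)%Z) by lia.
    destruct (Z_of_nat_complete _ Hk) as [k Hk'].
    replace n with (- Z.of_nat (S k))%Z by lia.
    replace (- Z.of_nat (S k) + 1)%Z with (- Z.of_nat k)%Z by lia.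
    replace (- Z.of_nat (S k) + 2)%Z with (1 - Z.of_nat k)%Z by lia.
    rewrite <- snd_bwd, !U_neg. set (t := iter_pair (bwd p q) k (0,1)). change (iter_pair (bwd p q) (S k) (0,1)) with (bwd p q t). unfold bwd. simpl fst. simpl snd. field. exact hq.
Qed.

Lemma U_add (m n : Z) : U (m + n) = U n * U (m + 1) + q * U (n - 1) * U m.
Proof.
  set (P := fun n => U (m + n) = U n * U (m + 1) + q * U (n - 1) * U m).
  assert (HQ : forall n, P n /\ P (Z.succ n)).
  { apply Z.peano_ind; unfold P.
    - assert (U0 : U 0 = 0) by reflexivity.
      assert (U1 : U 1 = 1) by (unfold lucasU; simpl; ring).
      assert (Um1 : U (-1) = / q) by (unfold lucasU; simpl; field; exact hq).
      replace (Z.succ 0) with 1%Z by lia. replace (0 - 1)%Z with (-1)%Z by lia. replace (1 - 1)%Z with 0%Z by lia. rewrite Z.add_0_r, U0, U1, Um1. split; [field; exact hq | ring].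
    - intros x [H1 H2]. split; [exact H2|].
      pose proof (U_rec (m + x)) as R1. pose proof (U_rec x) as R2. pose proof (U_rec (x - 1)) as R3.
      replace (m + x + 2)%Z with (m + Z.succ (Z.succ x))%Z in R1 by lia.
      replace (m + x + 1)%Z with (m + Z.succ x)%Z in R1 by lia.
      replace (x + 2)%Z with (Z.succ (Z.succ x)) in R2 by lia.
      replace (x + 1)%Z with (Z.succ x) in R2 by lia.
      replace (x - 1 + 2)%Z with (Z.succ (Z.succ x) - 1)%Z in R3 by lia.
      replace (x - 1 + 1)%Z with (Z.succ x - 1)%Z in R3 by lia.
      rewrite R1, R2, R3, H1, H2. ring.
    - intros x [H1 H2]. split; [|replace (Z.succ (Z.pred x)) with x by lia; exact H1].
      pose proof (U_rec (m + Z.pred x)) as R1. pose proof (U_rec (Z.pred x)) as R2.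
      pose proof (U_rec (Z.pred x - 1)) as R3.
      replace (m + Z.pred x + 2)%Z with (m + Z.succ x)%Z in R1 by lia.
      replace (m + Z.pred x + 1)%Z with (m + x)%Z in R1 by lia.
      replace (Z.pred x + 2)%Z with (Z.succ x) in R2 by lia.
      replace (Z.pred x + 1)%Z with x in R2 by lia.
      replace (Z.pred x - 1 + 2)%Z with (Z.succ x - 1)%Z in R3 by lia.
      replace (Z.pred x - 1 + 1)%Z with (x - 1)%Z in R3 by lia.
      apply (Rmult_eq_reg_l q); [|exact hq].
      replace (q * U (m + Z.pred x)) with (U (m + Z.succ x) - p * U (m + x)) by (rewrite R1; ring).
      replace (q * (U (Z.pred x) * U (m + 1) + q * U (Z.pred x - 1) * U m))
        with ((U (Z.succ x) - p * U x) * U (m+1) + q * (U (Z.succ x - 1) - p * U (x - 1)) * U m)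
        by (rewrite R2, R3; ring).
      rewrite H1, H2. ring. }
  apply HQ.
Qed.

Lemma gen (a b c d e : Z) :
  (U (d - a) * U (e - b) - U (e - a) * U (d - b)) * U (b - c)
    = (U (d - c) * U (e - b) - U (e - c) * U (d - b)) * U (b - a).
Proof.
  replace (d - a)%Z with ((d - b) + (b - a))%Z by lia.
  replace (e - a)%Z with ((e - b) + (b - a))%Z by lia.
  replace (d - c)%Z with ((d - b) + (b - c))%Z by lia.
  replace (e - c)%Z with ((e - b) + (b - c))%Z by lia.
  rewrite (U_add (d - b) (b - a)), (U_add (e - b) (b - a)), (U_add (d - b) (b - c)), (U_add (e - b) (b - c)). ring.
Qed.
End G.

Theorem corollary2 (a b c d e : Z) :
  (Fib (d - a) * Fib (e - b) - Fib (e - a) * Fib (d - b)) * Fib (b - c)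
    = (Fib (d - c) * Fib (e - b) - Fib (e - c) * Fib (d - b)) * Fib (b - a)
  /\
  (Jac (d - a) * Jac (e - b) - Jac (e - a) * Jac (d - b)) * Jac (b - c)
    = (Jac (d - c) * Jac (e - b) - Jac (e - c) * Jac (d - b)) * Jac (b - a)
  /\
  (Pell (d - a) * Pell (e - b) - Pell (e - a) * Pell (d - b)) * Pell (b - c)
    = (Pell (d - c) * Pell (e - b) - Pell (e - c) * Pell (d - b)) * Pell (b - a).
Proof.
  unfold Fib, Jac, Pell.
  split; [|split]; apply gen; lra.
Qed.
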